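(* Let $G$ be a graph containing a pendant block isomorphic to $K_r$ with $r\ge 3$, whose cutpoint is $v$. Then \[ |M_G|=\binom{r-1}{2}\,|M_{G-K_r}|+\sum_{p\in N(v)}|M_{G-(N[v]\cup N[p])}|, \] where $G-K_r$ denotes the graph obtained from $G$ by deleting all $r$ vertices of this block (including $v$).
   Context: Graphs are finite, simple, undirected. A block is a maximal $2$-connected subgraph; a pendant block is a block containing exactly one cutpoint of $G$. An induced matching is a matching whose endpoints induce a $1$-regular subgraph; it is maximal if not properly contained in another induced matching; $M_G$ is the set of maximal induced matchings of $G$ (a graph with no edges has exactly one, the empty matching). For $S\subseteq V(G)$, $G-S$ is the subgraph induced by $V(G)\setminus S$; $N(v)$, $N[v]$ are the open and closed neighborhoods. *)

(* Defs.v *)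
(* A finite simple graph G is given by a finite vertex type T
   (vertex set = all of T) and a symmetric irreflexive adjacency relation e. *)
From mathcomp Require Import all_boot.
Set Implicit Arguments. Unset Strict Implicit. Unset Printing Implicit Defensive.

Section Graphs.
Variables (T : finType) (e : rel T).

Definition simple_graph := irreflexive e /\ symmetric e.

Definition N (v : T) : {set T} := [set u | e v u].
Definition Nc (v : T) : {set T} := v |: N v.

Definition joined (f : rel T) (W : {set T}) (x y : T) : bool :=
  connect [rel a b | [&& f a b, a \in W & b \in W]] x y.

Definition connected_on (f : rel T) (W : {set T}) : Prop :=
  forall x y, x \in W -> y \in W -> joined f W x y.

(* v is a cutpoint of G: deleting v disconnects two vertices that are
   connected in G (i.e. G - v has more components than G) *)
Definition cutpoint (v : T) : Prop :=
  exists x y, [/\ x != v, y != v, joined e setT x y &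
                  ~~ joined e (setT :\ v) x y].

Definition subgraph (B : {set T}) (F : {set T * T}) : Prop :=
  (forall p, p \in F -> [&& e p.1 p.2, p.1 \in B & p.2 \in B]) /\
  (forall x y, (x, y) \in F -> (y, x) \in F).

Definition subrel (F : {set T * T}) : rel T := fun a b => (a, b) \in F.

Definition two_connected (B : {set T}) (F : {set T * T}) : Prop :=
  [/\ 3 <= #|B|, connected_on (subrel F) B &
      forall w, w \in B -> connected_on (subrel F) (B :\ w)].

Definition block (B : {set T}) (F : {set T * T}) : Prop :=
  [/\ subgraph B F, two_connected B F &
      forall B' F', subgraph B' F' -> two_connected B' F' ->
        B \subset B' -> F \subset F' -> B = B' /\ F = F'].

Definition complete_subgraph (r : nat) (B : {set T}) (F : {set T * T}) : Prop :=
  #|B| = r /\ (forall x y, x \in B -> y \in B -> x != y -> (x, y) \in F).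

Definition pendant_block_at (B : {set T}) (F : {set T * T}) (v : T) : Prop :=
  [/\ block B F, v \in B, cutpoint v &
      forall u, u \in B -> cutpoint u -> u = v].

Definition endpoints (M : {set {set T}}) : {set T} := cover M.

(* M is an induced matching of G[W]: a matching of G[W] (edges are 2-sets
   {x,y} with x,y in W adjacent, pairwise disjoint) whose endpoints induce a
   1-regular subgraph of G *)
Definition induced_matching (W : {set T}) (M : {set {set T}}) : bool :=
  [&& [forall m in M, exists x, exists y,
        [&& m == [set x; y], x \in W, y \in W & e x y]],
      trivIset M &
      [forall x in endpoints M, #|[set y in endpoints M | e x y]| == 1]].

Definition maximal_induced_matching (W : {set T}) (M : {set {set T}}) : bool :=
  induced_matching W M &&
  [forall M' : {set {set T}}, (induced_matching W M' && (M \subset M')) ==> (M' == M)].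

Definition MIM (W : {set T}) : {set {set {set T}}} :=
  [set M | maximal_induced_matching W M].

End Graphs.

(* Main.v *)
Require Import Defs.
From mathcomp Require Import all_boot.
Set Implicit Arguments. Unset Strict Implicit. Unset Printing Implicit Defensive.

Section IM.
Variables (T : finType) (e : rel T).
Hypotheses (irr : irreflexive e) (sym : symmetric e).

Definition IMp (W : {set T}) (M : {set {set T}}) : Prop :=
  (forall m, m \in M -> exists x y, [/\ m = [set x; y], x \in W, y \in W & e x y]) /\
  (forall m1 m2 a b, m1 \in M -> m2 \in M -> m1 != m2 -> a \in m1 -> b \in m2 ->
     a != b /\ ~~ e a b).

Definition Dom (W : {set T}) (M : {set {set T}}) : Prop :=
  forall a b, a \in W -> b \in W -> e a b ->
    exists2 c, c \in cover M & [|| c == a, c == b, e a c | e b c].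

Lemma coverP (M : {set {set T}}) c : reflect (exists2 m, m \in M & c \in m) (c \in cover M).
Proof. exact: bigcupP. Qed.

Lemma edge_other (m : {set T}) x y a : m = [set x; y] -> e x y -> a \in m ->
  exists2 a', m = [set a; a'] & e a a'.
Proof.
move=> -> exy; rewrite in_set2 => /orP [/eqP -> | /eqP ->]; first by exists y.
by exists x; rewrite 1?setUC // sym.
Qed.

Lemma IM_mem W M m a : IMp W M -> m \in M -> a \in m -> a \in W.
Proof.
move=> [H1 _] mM am; have [x [y [em xW yW _]]] := H1 m mM.
by move: am; rewrite em in_set2 => /orP [/eqP -> | /eqP ->].
Qed.

Lemma IM_eq W M : induced_matching e W M <-> IMp W M.
Proof.
split.
- move=> /and3P [H1 H2 H3].
  have H1' : forall m, m \in M -> exists x y, [/\ m = [set x; y], x \in W, y \in W & e x y].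
    move=> m mM; move/forall_inP: H1 => /(_ m mM) /existsP [x /existsP [y /and4P [/eqP -> xW yW exy]]].
    by exists x, y.
  split=> // m1 m2 a b m1M m2M neq am1 bm2.
  have dj := trivIsetP H2 m1 m2 m1M m2M neq.
  have ab : a != b.
    by apply/eqP => eab; move: (disjointFr dj am1); rewrite eab bm2.
  split=> //; apply/negP => eab.
  have [x [y [em _ _ exy]]] := H1' m1 m1M.
  have [a' ea' eaa'] := edge_other em exy am1.
  have acov : a \in endpoints M by apply/coverP; exists m1.
  move/forall_inP: H3 => /(_ a acov) /cards1P [c hc].
  have a'c : a' \in [set y0 in endpoints M | e a y0].
    by rewrite inE eaa' andbT; apply/coverP; exists m1 => //; rewrite ea' !inE eqxx orbT.
  have bc : b \in [set y0 in endpoints M | e a y0].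
    by rewrite inE eab andbT; apply/coverP; exists m2.
  rewrite hc !inE in a'c bc; move/eqP: a'c => a'c; move/eqP: bc => bc.
  have : a' \in m1 by rewrite ea' !inE eqxx orbT.
  by rewrite a'c -bc (disjointFl dj bm2).
- move=> [H1 H2]; apply/and3P; split.
  + apply/forall_inP => m mM; have [x [y [-> xW yW exy]]] := H1 m mM.
    by apply/existsP; exists x; apply/existsP; exists y; rewrite eqxx xW yW exy.
  + apply/trivIsetP => m1 m2 m1M m2M neq; apply/pred0P => c /=.
    apply/negP => /andP [c1 c2]; have [] := H2 _ _ _ _ m1M m2M neq c1 c2.
    by rewrite eqxx.
  + apply/forall_inP => a /coverP [m mM am].
    have [x [y [em _ _ exy]]] := H1 m mM.
    have [a' ea' eaa'] := edge_other em exy am.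
    apply/cards1P; exists a'; apply/setP => c; rewrite !inE.
    apply/idP/idP.
    * move=> /andP [/coverP [m2 m2M cm2] eac].
      case: (eqVneq m m2) => [em2 | neq].
        by move: cm2; rewrite -em2 ea' !inE => /orP [/eqP ca | //]; rewrite ca irr in eac.
      by have [_] := H2 _ _ _ _ mM m2M neq am cm2; rewrite eac.
    * move/eqP => ->; rewrite eaa' andbT; apply/coverP; exists m => //.
      by rewrite ea' !inE eqxx orbT.
Qed.

Lemma max_eq W M : maximal_induced_matching e W M <-> IMp W M /\ Dom W M.
Proof.
split.
- move=> /andP [HIM Hmax]; have HI := HIM; move/IM_eq: HI => HI; split=> //.
  move=> a b aW bW eab.
  case: (boolP [exists c in cover M, [|| c == a, c == b, e a c | e b c]]).
    by move/exists_inP => [c cc hc]; exists c.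
  move/exists_inP => nc; exfalso.
  have nc' : forall c, c \in cover M -> [/\ c != a, c != b, ~~ e a c & ~~ e b c].
    move=> c cc; have : ~~ [|| c == a, c == b, e a c | e b c] by apply/negP => h; apply: nc; exists c.
    by rewrite !negb_or => /and4P [].
  set M' := [set a; b] |: M.
  have HM' : IMp W M'.
    case: HI => H1 H2; split.
    + move=> m; rewrite in_setU1 => /orP [/eqP -> | ]; first by exists a, b.
      exact: H1.
    + move=> m1 m2 a0 b0; rewrite !in_setU1.
      move=> /orP [/eqP e1 | m1M] /orP [/eqP e2 | m2M] neq h1 h2.
      * by rewrite e1 e2 eqxx in neq.
      * have cc : b0 \in cover M by apply/coverP; exists m2.
        have [n1 n2 n3 n4] := nc' b0 cc.
        move: h1; rewrite e1 in_set2 => /orP [/eqP -> | /eqP ->].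
          by rewrite eq_sym n1.
        by rewrite eq_sym n2.
      * have cc : a0 \in cover M by apply/coverP; exists m1.
        have [n1 n2 n3 n4] := nc' a0 cc.
        move: h2; rewrite e2 in_set2 => /orP [/eqP -> | /eqP ->].
          by rewrite n1 sym.
        by rewrite n2 sym.
      * exact: H2 m1M m2M neq h1 h2.
  have sub : M \subset M' by apply/subsetP => m mM; rewrite in_setU1 mM orbT.
  move/forallP: Hmax => /(_ M'); rewrite sub andbT.
  have -> : induced_matching e W M' by apply/IM_eq.
  move=> /eqP hM.
  have : a \in cover M.
    by apply/coverP; exists [set a; b]; rewrite -?hM ?in_setU1 ?eqxx // !inE eqxx.
  by move/nc'=> [] ; rewrite eqxx.
- move=> [HI HD]; apply/andP; split; first by apply/IM_eq.
  apply/forallP => M'; apply/implyP => /andP [HI' sub].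
  move/IM_eq: HI' => [H1 H2].
  apply/negPn/negP => neq.
  have : M' :\: M != set0.
    apply/negP => /eqP h; move/negP: neq; apply; rewrite eqEsubset sub andbT.
    by apply/subsetP => m mM'; apply/negPn/negP => mM; move/setP: h => /(_ m); rewrite !inE mM mM'.
  move/set0Pn => [m]; rewrite inE => /andP [mnM mM'].
  have [a [b [em aW bW eab]]] := H1 m mM'.
  have [c /coverP [m0 m0M cm0] hc] := HD a b aW bW eab.
  have m0M' : m0 \in M' by move/subsetP: sub; apply.
  have neq' : m != m0 by apply/eqP => h; rewrite h m0M in mnM.
  have am : a \in m by rewrite em !inE eqxx.
  have bm : b \in m by rewrite em !inE eqxx orbT.
  have [n1 n2] := H2 _ _ _ _ mM' m0M' neq' am cm0.
  have [n3 n4] := H2 _ _ _ _ mM' m0M' neq' bm cm0.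
  by move: hc; rewrite eq_sym (negbTE n1) eq_sym (negbTE n3) (negbTE n2) (negbTE n4).
Qed.

Lemma MIMP W M : M \in MIM e W <-> IMp W M /\ Dom W M.
Proof. by rewrite inE; apply: max_eq. Qed.

End IM.


Lemma card_sub_sum (K : finType) (X : {set K}) (P : pred K) :
  #|[set x in X | P x]| = \sum_(x in X) (P x : nat).
Proof.
rewrite -sum1_card (eq_bigl (fun x => (x \in X) && P x)); last by move=> x; rewrite inE.
rewrite big_mkcondr /=.
apply: eq_bigr => x _; by case: (P x).
Qed.

Section A0.
Variables (T : finType) (e : rel T).
Hypotheses (irr : irreflexive e) (sym : symmetric e).
Variables (B : {set T}) (v : T).
Hypotheses (vB : v \in B)
  (clique : forall x y, x \in B -> y \in B -> x != y -> e x y)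
  (pend : forall x z, x \in B -> x != v -> e x z -> z \in B)
  (big : 2 < #|B|).

Lemma pend' x z : x \in B -> x != v -> e z x -> z \in B.
Proof. by move=> xB xv ezx; apply: (pend xB xv); rewrite sym. Qed.

Definition D := [set A : {set T} | A \subset B :\ v & #|A| == 2].

Lemma DP A : A \in D -> exists x y, [/\ A = [set x; y], x != y, x \in B :\ v & y \in B :\ v].
Proof.
rewrite inE => /andP [sub /cards2P [x [y [xy eA]]]]; exists x, y; split=> //;
  by move/subsetP: sub; apply; rewrite eA !inE eqxx ?orbT.
Qed.

Lemma notinM A M : A \in D -> IMp e (~: B) M -> A \notin M.
Proof.
move=> /DP [x [y [-> _ xB _]]] HI; apply/negP => h.
have := IM_mem HI h (setU11 x _); move: xB; rewrite !inE => /andP [_ ->] //.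
Qed.

Lemma extend0 A M : A \in D -> IMp e (~: B) M -> Dom e (~: B) M ->
  [/\ IMp e setT (A |: M), Dom e setT (A |: M) & v \notin cover (A |: M)].
Proof.
move=> AD HI HD; have [x [y [eA xy xB yB]]] := DP AD.
move: xB yB; rewrite !inE => /andP [xv xB] /andP [yv yB].
have HI0 := HI; case: HI0 => H1 H2; split; first split.
- move=> m; rewrite in_setU1 => /orP [/eqP -> | mM].
    by exists x, y; rewrite !inE clique.
  by have [x0 [y0 [? ? ? ?]]] := H1 m mM; exists x0, y0; rewrite !inE.
- have outB : forall m b, m \in M -> b \in m -> b \notin B.
    by move=> m b mM bm; have := IM_mem HI mM bm; rewrite inE.
  have inAB : forall a, a \in A -> (a \in B) && (a != v).
    by move=> a; rewrite eA in_set2 => /orP [] /eqP ->; rewrite ?xB ?yB.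
  move=> m1 m2 a b; rewrite !in_setU1.
  move=> /orP [/eqP e1 | m1M] /orP [/eqP e2 | m2M] neq h1 h2.
  + by rewrite e1 e2 eqxx in neq.
  + rewrite e1 in h1; have /andP [aB av] := inAB a h1; have bB := outB _ _ m2M h2.
    split; first by apply/eqP => ab; rewrite -ab aB in bB.
    by apply/negP => eab; rewrite (pend aB av eab) in bB.
  + rewrite e2 in h2; have /andP [bB bv] := inAB b h2; have aB := outB _ _ m1M h1.
    split; first by apply/eqP => ab; rewrite ab bB in aB.
    by apply/negP => eab; rewrite (pend' bB bv eab) in aB.
  + exact: H2 m1M m2M neq h1 h2.
- move=> a b _ _ eab.
  have xc : x \in cover (A |: M) by apply/coverP; exists A; rewrite ?eA !inE eqxx.
  case: (boolP (a \in B)) => aB.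
    case: (eqVneq a x) => [-> | ax]; first by exists x; rewrite ?eqxx.
    by exists x => //; rewrite clique // !orbT.
  case: (boolP (b \in B)) => bB.
    case: (eqVneq b x) => [-> | bx]; first by exists x; rewrite ?eqxx ?orbT.
    by exists x => //; rewrite (clique bB) // !orbT.
  have aW : a \in ~: B by rewrite inE.
  have bW : b \in ~: B by rewrite inE.
  have [c /coverP [m mM cm] hc] := HD a b aW bW eab.
  by exists c => //; apply/coverP; exists m; rewrite // in_setU1 mM orbT.
- apply/negP => /coverP [m]; rewrite in_setU1 => /orP [/eqP -> | mM] vm.
    by move: vm; rewrite eA in_set2 => /orP [] /eqP ev; rewrite -ev eqxx in xv yv.
  by have := IM_mem HI mM vm; rewrite inE vB.
Qed.

Lemma restrict0 M : IMp e setT M -> Dom e setT M -> v \notin cover M ->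
  exists2 A, A \in D & [/\ A \in M, IMp e (~: B) (M :\ A) & Dom e (~: B) (M :\ A)].
Proof.
move=> [H1 H2] HD vc.
have : 1 < #|B :\ v| by move: big; rewrite (cardsD1 v B) vB.
move/card_gt1P => [x [y [xB yB xy]]].
move: (xB) (yB); rewrite !inE => /andP [xv xB'] /andP [yv yB'].
have [c /coverP [m mM cm] hc] := HD x y (in_setT x) (in_setT y) (clique xB' yB' xy).
have cB : c \in B.
  move: hc => /or4P [/eqP -> | /eqP -> | h | h] //.
    exact: pend xB' xv h.
  exact: pend yB' yv h.
have cv : c != v by apply/eqP => ec; rewrite -ec in vc; move/negP: vc; apply; apply/coverP; exists m.
have [x0 [y0 [em _ _ exy]]] := H1 m mM.
have [d ed ecd] := edge_other sym em exy cm.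
have dB : d \in B := pend cB cv ecd.
have dv : d != v.
  by apply/eqP => dv; move/negP: vc; apply; apply/coverP; exists m; rewrite // ed -dv !inE eqxx orbT.
have cd : c != d by apply/eqP => cd; rewrite cd irr in ecd.
have mD : m \in D.
  rewrite inE; apply/andP; split; last by apply/cards2P; exists c, d.
  by apply/subsetP => u; rewrite ed in_set2 => /orP [] /eqP ->; rewrite !inE ?cv ?cB ?dv ?dB.
exists m => //; split=> //; first split.
- move=> m2 /setD1P [neq m2M]; have [a [b [em2 _ _ eab]]] := H1 m2 m2M.
  have outB : forall u, u \in m2 -> u \in ~: B.
    move=> u um2; rewrite inE; apply/negP => uB.
    have uv : u != v by apply/eqP => uv; move/negP: vc; apply; apply/coverP; exists m2; rewrite -?uv.
    have [n1 n2] := H2 _ _ _ _ m2M mM neq um2 cm.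
    by rewrite clique in n2.
  by exists a, b; split=> //; apply: outB; rewrite em2 !inE eqxx ?orbT.
- by move=> m1 m2 a b /setD1P [_ m1M] /setD1P [_ m2M]; apply: H2.
- move=> a b; rewrite !inE => aB bB eab.
  have [c' /coverP [m' m'M cm'] hc'] := HD a b (in_setT a) (in_setT b) eab.
  case: (eqVneq m' m) => [em' | neq].
    exfalso; rewrite em' ed in_set2 in cm'.
    have [c'B c'v] : c' \in B /\ c' != v by case/orP: cm' => /eqP ->.
    move: hc' => /or4P [/eqP ec | /eqP ec | h | h].
    + by rewrite -ec c'B in aB.
    + by rewrite -ec c'B in bB.
    + by rewrite (pend' c'B c'v h) in aB.
    + by rewrite (pend' c'B c'v h) in bB.
  by exists c' => //; apply/coverP; exists m'; rewrite // !inE neq.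
Qed.

Lemma cardA0 : #|[set M in MIM e setT | v \notin cover M]| = 'C(#|B :\ v|, 2) * #|MIM e (~: B)|.
Proof.
have -> : 'C(#|B :\ v|, 2) = #|D| by rewrite cards_draws.
rewrite -cardsX -(@card_in_imset _ _ (fun q : {set T} * {set {set T}} => q.1 |: q.2) (mem (setX D (MIM e (~: B))))).
  apply: eq_card => M; rewrite [in LHS]inE; apply/andP/imsetP.
  - move=> [/(MIMP irr sym) [HI HD] vc].
    have [A AD [AM HI' HD']] := restrict0 HI HD vc.
    exists (A, M :\ A); last by rewrite /= setD1K.
    by rewrite in_setX AD /=; apply/(MIMP irr sym).
  - move=> [[A M']]; rewrite in_setX /= => /andP [AD /(MIMP irr sym) [HI HD]] ->.
    have [HI' HD' vc] := extend0 AD HI HD; split=> //; exact/(MIMP irr sym).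
move=> [A1 M1] [A2 M2]; rewrite /= !in_setX /=.
move=> /andP [A1D /(MIMP irr sym) [HI1 _]] /andP [A2D /(MIMP irr sym) [HI2 _]] eq12.
have n1 := notinM A1D HI1; have n2 := notinM A2D HI2.
have n12 := notinM A1D HI2.
have eA : A1 = A2.
  have : A1 \in A2 |: M2 by rewrite -eq12 setU11.
  by rewrite in_setU1 (negbTE n12) orbF => /eqP.
rewrite -eA in eq12 *.
by rewrite -(setU1K n1) eq12 setU1K.
Qed.

End A0.


Section Ap.
Variables (T : finType) (e : rel T).
Hypotheses (irr : irreflexive e) (sym : symmetric e).
Variables (v p : T).
Hypothesis evp : e v p.

Let W := ~: (Nc e v :|: Nc e p).

Lemma inW u : u \in W = [&& u != v, ~~ e v u, u != p & ~~ e p u].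
Proof. by rewrite /W /Nc /N !inE !negb_or -!andbA. Qed.

Lemma vp_notin M : IMp e W M -> [set v; p] \notin M.
Proof.
move=> HI; apply/negP => h.
have := IM_mem HI h (setU11 v _); by rewrite inW eqxx.
Qed.

Lemma extend_vp M : IMp e W M -> Dom e W M ->
  IMp e setT ([set v; p] |: M) /\ Dom e setT ([set v; p] |: M).
Proof.
move=> HI HD; have HI0 := HI; case: HI0 => H1 H2; split; first split.
- move=> m; rewrite in_setU1 => /orP [/eqP -> | mM]; first by exists v, p; rewrite !inE.
  by have [x [y [? ? ? ?]]] := H1 m mM; exists x, y; rewrite !inE.
- move=> m1 m2 a b; rewrite !in_setU1.
  move=> /orP [/eqP e1 | m1M] /orP [/eqP e2 | m2M] neq h1 h2.
  + by rewrite e1 e2 eqxx in neq.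
  + have := IM_mem HI m2M h2; rewrite inW => /and4P [n1 n2 n3 n4].
    move: h1; rewrite e1 in_set2 => /orP [/eqP -> | /eqP ->]; first by rewrite eq_sym n1.
    by rewrite eq_sym n3.
  + have := IM_mem HI m1M h1; rewrite inW => /and4P [n1 n2 n3 n4].
    move: h2; rewrite e2 in_set2 => /orP [/eqP -> | /eqP ->]; first by rewrite n1 sym.
    by rewrite n3 sym.
  + exact: H2 m1M m2M neq h1 h2.
- move=> a b _ _ eab.
  have vc : v \in cover ([set v; p] |: M) by apply/coverP; exists [set v; p]; rewrite !inE eqxx.
  have pc : p \in cover ([set v; p] |: M) by apply/coverP; exists [set v; p]; rewrite !inE eqxx ?orbT.
  case: (boolP (a \in W)) => aW; last first.
    move: aW; rewrite inW !negb_and !negbK => /or4P [/eqP -> | eva | /eqP -> | epa].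
    * by exists v; rewrite ?eqxx.
    * by exists v => //; rewrite sym eva !orbT.
    * by exists p; rewrite ?eqxx.
    * by exists p => //; rewrite sym epa !orbT.
  case: (boolP (b \in W)) => bW; last first.
    move: bW; rewrite inW !negb_and !negbK => /or4P [/eqP -> | eva | /eqP -> | epa].
    * by exists v; rewrite ?eqxx ?orbT.
    * by exists v => //; rewrite (sym b) eva !orbT.
    * by exists p; rewrite ?eqxx ?orbT.
    * by exists p => //; rewrite (sym b) epa !orbT.
  have [c /coverP [m mM cm] hc] := HD a b aW bW eab.
  by exists c => //; apply/coverP; exists m; rewrite // in_setU1 mM orbT.
Qed.

Lemma restrict_vp M : IMp e setT M -> Dom e setT M -> [set v; p] \in M ->
  IMp e W (M :\ [set v; p]) /\ Dom e W (M :\ [set v; p]).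
Proof.
move=> [H1 H2] HD vpM.
have vpin : v \in [set v; p] by rewrite !inE eqxx.
have ppin : p \in [set v; p] by rewrite !inE eqxx orbT.
have memW : forall m a, m \in M :\ [set v; p] -> a \in m -> a \in W.
  move=> m a /setD1P [neq mM] am.
  have [n1 n2] := H2 _ _ _ _ mM vpM neq am vpin.
  have [n3 n4] := H2 _ _ _ _ mM vpM neq am ppin.
  by rewrite inW n1 n3 (sym v) n2 (sym p) n4.
split; first split.
- move=> m mM'; have mM : m \in M by move: mM'; rewrite !inE => /andP [].
  have [x [y [em _ _ exy]]] := H1 m mM; exists x, y; split=> //.
    by apply: (memW m) => //; rewrite em !inE eqxx.
  by apply: (memW m) => //; rewrite em !inE eqxx orbT.
- move=> m1 m2 a b; rewrite !inE => /andP [_ m1M] /andP [_ m2M]; exact: H2.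
- move=> a b aW bW eab.
  have [c /coverP [m mM cm] hc] := HD a b (in_setT a) (in_setT b) eab.
  case: (eqVneq m [set v; p]) => [em | neq].
    exfalso; move: aW bW hc; rewrite !inW em in cm *.
    move: cm; rewrite in_set2 => /orP [] /eqP -> /and4P [a1 a2 a3 a4] /and4P [b1 b2 b3 b4].
      by rewrite !(eq_sym v) (negbTE a1) (negbTE b1) !(sym _ v) (negbTE a2) (negbTE b2).
    by rewrite !(eq_sym p) (negbTE a3) (negbTE b3) !(sym _ p) (negbTE a4) (negbTE b4).
  by exists c => //; apply/coverP; exists m; rewrite // !inE neq mM.
Qed.

Lemma cardAp : #|[set M in MIM e setT | [set v; p] \in M]| = #|MIM e W|.
Proof.
rewrite -(@card_in_imset _ _ (fun M' => [set v; p] |: M') (mem (MIM e W))).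
  apply: eq_card => M; rewrite [in LHS]inE; apply/andP/imsetP.
  - move=> [/(MIMP irr sym) [HI HD] vpM].
    have [HI' HD'] := restrict_vp HI HD vpM.
    exists (M :\ [set v; p]); last by rewrite setD1K.
    by apply/(MIMP irr sym).
  - move=> [M' /(MIMP irr sym) [HI HD] ->]; split; last by rewrite setU11.
    have [HI' HD'] := extend_vp HI HD; exact/(MIMP irr sym).
move=> M1 M2 /(MIMP irr sym) [HI1 _] /(MIMP irr sym) [HI2 _] /= eq12.
by rewrite -(setU1K (vp_notin HI1)) -(setU1K (vp_notin HI2)) eq12.
Qed.

End Ap.


Section Split.
Variables (T : finType) (e : rel T).
Hypotheses (irr : irreflexive e) (sym : symmetric e).
Variable v : T.

Lemma split_count : #|MIM e setT| =
  #|[set M in MIM e setT | v \notin cover M]| +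
  \sum_(p in N e v) #|[set M in MIM e setT | [set v; p] \in M]|.
Proof.
under eq_bigr => p _ do rewrite (card_sub_sum _ (fun M : {set {set T}} => [set v; (p : T)] \in M)).
rewrite (card_sub_sum _ (fun M => v \notin cover M)).
rewrite exchange_big /= -big_split /= -sum1_card.
apply: eq_bigr => M /(MIMP irr sym) [[H1 H2] _].
case: (boolP (v \in cover M)) => vc /=.
- move/coverP: (vc) => [m mM vm]; have [x [y [em _ _ exy]]] := H1 m mM.
  have [p0 ep0 evp0] := edge_other sym em exy vm.
  have p0N : p0 \in N e v by rewrite inE.
  rewrite (bigD1 p0) //= -ep0 mM big1 // => p /andP [pN pp0].
  apply/eqP; rewrite eqb0; apply/negP => h.
  have neq : [set v; p] != m.
    rewrite ep0; apply/negP => /eqP hs.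
    have : p \in [set v; p0] by rewrite -hs !inE eqxx orbT.
    rewrite in_set2 => /orP [/eqP pv | pp]; last by rewrite pp in pp0.
    by move: pN; rewrite inE pv irr.
  by have [] := H2 _ _ _ _ h mM neq (setU11 v _) vm; rewrite eqxx.
- rewrite big1 // => p _; apply/eqP; rewrite eqb0; apply/negP => h; move/negP: vc; apply.
  by apply/coverP; exists [set v; p]; rewrite // !inE eqxx.
Qed.

End Split.


Lemma conn_K (T : finType) (Q : rel T) (U K : {set T}) : symmetric Q ->
  (forall k1 k2, k1 \in K -> k2 \in K -> k1 != k2 -> Q k1 k2) ->
  (forall y, y \in U -> exists2 k, k \in K & connect Q y k) ->
  forall y1 y2, y1 \in U -> y2 \in U -> connect Q y1 y2.
Proof.
move=> sQ cK reach y1 y2 u1 u2.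
have [k1 k1K c1] := reach y1 u1; have [k2 k2K c2] := reach y2 u2.
have c2' : connect Q k2 y2 by rewrite (sym_connect_sym sQ).
apply: (connect_trans c1); apply: connect_trans c2'.
case: (eqVneq k1 k2) => [-> // | neq]; exact: connect1 (cK _ _ k1K k2K neq).
Qed.

Section Ear.
Variables (T : finType) (e : rel T).
Hypotheses (irr : irreflexive e) (sym : symmetric e).
Variables (B : {set T}) (x b : T) (E : seq T).
Hypotheses (clique : forall x y, x \in B -> y \in B -> x != y -> e x y)
  (xB : x \in B) (bB : b \in B) (bx : b != x)
  (pE : path e x E) (uE : uniq E) (outE : forall u, u \in E -> u \notin B)
  (Ene : E != [::]) (eb : e (last x E) b).

Definition B' := B :|: [set u in E].
Definition F' := [set q : T * T | [&& e q.1 q.2, q.1 \in B' & q.2 \in B']].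
Definition QU (U : {set T}) := [rel a c | [&& Defs.subrel F' a c, a \in U & c \in U]].

Lemma QU_sym U : symmetric (QU U).
Proof.
move=> a c; rewrite /= /Defs.subrel !inE /= sym.
by case: (a \in B); case: (a \in E); case: (c \in B); case: (c \in E); case: (a \in U); case: (c \in U); case: (e c a).
Qed.

Lemma EB' u : u \in E -> u \in B'.
Proof. by move=> uE'; rewrite !inE uE' orbT. Qed.

Lemma BB' u : u \in B -> u \in B'.
Proof. by move=> uB; rewrite !inE uB. Qed.

Lemma path_QU (U : {set T}) a s : U \subset B' -> path e a s -> all (mem U) (a :: s) -> path (QU U) a s.
Proof.
move=> sub ps al; apply: (sub_in_path _ al ps) => c d cU dU ecd.
rewrite /= /Defs.subrel inE /= ecd cU dU !andbT.
by rewrite !(subsetP sub).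
Qed.

Lemma lastE : last x E \in E.
Proof. by case: E Ene => [//| z s] _ /=; exact: mem_last. Qed.

Lemma caseA (U : {set T}) y E0 : U \subset B' -> path e x E0 -> all (mem U) (x :: E0) -> y \in E0 ->
  connect (QU U) y x.
Proof.
move=> sub ps al yE; rewrite (sym_connect_sym (@QU_sym U)).
by apply: (path_connect (path_QU sub ps al)); rewrite inE yE orbT.
Qed.

Lemma caseB (U : {set T}) y E0 : U \subset B' -> path e y E0 -> all (mem U) (y :: E0) ->
  last y E0 = last x E -> b \in U -> connect (QU U) y b.
Proof.
move=> sub ps al el bU.
apply: (connect_trans (y := last y E0)).
  exact: (path_connect (path_QU sub ps al)) (mem_last _ _).
apply: connect1; rewrite /= /Defs.subrel inE /= el eb bU.
have lU : last x E \in U by move/allP: al; apply; rewrite -el mem_last.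
by rewrite lU (EB' lastE) (BB' bB).
Qed.

Hypothesis card3 : 3 <= #|B|.

Lemma splitE (s : seq T) y : y \in s -> exists s1 s2, s = s1 ++ y :: s2.
Proof. by case/splitPr => s1 s2; exists s1, s2. Qed.

Lemma clique_QU (U : {set T}) k1 k2 : k1 \in B :&: U -> k2 \in B :&: U -> k1 != k2 -> QU U k1 k2.
Proof.
rewrite !inE => /andP [k1B k1U] /andP [k2B k2U] neq.
by rewrite /= /Defs.subrel inE /= clique // !inE k1B k2B k1U k2U.
Qed.

Lemma conn_B' : connected_on (Defs.subrel F') B'.
Proof.
move=> y1 y2 u1 u2; apply: (conn_K (@QU_sym B') (@clique_QU B') _ u1 u2) => y yU.
case: (boolP (y \in B)) => yB; first by exists y; rewrite ?inE ?yB ?yU.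
have yE : y \in E by move: yU; rewrite !inE (negbTE yB).
exists x; first by rewrite !inE xB.
apply: (caseA (subxx _) pE _ yE).
apply/allP => u; rewrite inE => /orP [/eqP -> | uE']; first exact: BB'.
exact: EB'.
Qed.

Lemma inBU' w k : k \in B -> k != w -> k \in B :&: (B' :\ w).
Proof. by move=> kB kw; apply/setIP; split=> //; apply/setD1P; split=> //; exact: BB'. Qed.

Lemma conn_B'w w : w \in B' -> connected_on (Defs.subrel F') (B' :\ w).
Proof.
move=> wB' y1 y2 u1 u2.
have sub : B' :\ w \subset B' by apply/subsetP => u /setD1P [].
apply: (conn_K (@QU_sym _) (@clique_QU _) _ u1 u2) => y yU.
case: (boolP (y \in B)) => yB; first by exists y; rewrite // in_setI yB yU.
have [yw yB'] : y != w /\ y \in B' by move: yU => /setD1P.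
have yE : y \in E by move: yB'; rewrite !inE (negbTE yB).
have EU : forall u, u \in E -> u != w -> u \in B' :\ w.
  by move=> u uE' uw; apply/setD1P; split; [exact: uw | exact: EB'].
case: (boolP (w \in B)) => wB.
  have Ew : forall u, u \in E -> u != w.
    by move=> u uE'; apply/eqP => uw; move: (outE uE'); rewrite uw wB.
  case: (eqVneq w x) => [wx | wx].
    exists b; first by apply: inBU' => //; rewrite wx.
    have [E1 [E2 eE]] := splitE yE.
    have p2 : path e y E2 by move: pE; rewrite eE cat_path /= => /and3P [].
    apply: (caseB sub p2).
    - apply/allP => u uin; apply: EU; rewrite ?eE ?mem_cat ?uin ?orbT //.
      apply: Ew; by rewrite eE mem_cat uin orbT.
    - by rewrite eE last_cat.
    - by apply/setD1P; split; [rewrite wx | exact: BB'].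
  exists x; first by apply: inBU' => //; rewrite eq_sym.
  apply: (caseA sub pE _ yE).
  apply/allP => u; rewrite inE => /orP [/eqP -> | uE'].
    by apply/setD1P; split; [rewrite eq_sym | exact: BB'].
  by apply: EU => //; apply: Ew.
have wE : w \in E by move: wB'; rewrite !inE (negbTE wB).
have [E1 [E2 eE]] := splitE wE.
have := uE; rewrite eE cat_uniq /= => /and4P [_ /norP [wE1' _] wE2 _].
have bU : b \in B' :\ w by rewrite !inE bB andbT; apply/eqP => bw; rewrite -bw bB in wB.
move: yE; rewrite eE mem_cat inE (negbTE yw) /= => /orP [yE1 | yE2].
  exists x; first by apply: inBU' => //; apply/eqP => xw; rewrite -xw xB in wB.
  have p1 : path e x E1 by move: pE; rewrite eE cat_path => /andP [].
  apply: (caseA sub p1 _ yE1).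
  apply/allP => u; rewrite inE => /orP [/eqP -> | uE1].
    by apply/setD1P; split; [apply/eqP => xw; rewrite -xw xB in wB | exact: BB'].
  apply: EU; first by rewrite eE mem_cat uE1.
  by apply/eqP => uw; rewrite -uw uE1 in wE1'.
have [E21 [E22 eE2]] := splitE yE2.
exists b; first by apply: inBU' => //; apply/eqP => bw; rewrite -bw bB in wB.
have p2 : path e y E22.
  by move: pE; rewrite eE eE2 cat_path /= cat_path /= => /and4P [_ _ _ /andP [_ ->]].
apply: (caseB sub p2) => //.
- apply/allP => u uin; apply: EU.
    by move: uin; rewrite inE => /orP [/eqP -> | h]; rewrite eE eE2 !(mem_cat, inE) ?eqxx ?h !orbT.
  apply/eqP => uw; move: wE2; rewrite eE2 mem_cat inE -uw; move: uin; rewrite inE.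
  by case/orP => [/eqP -> | ->]; rewrite ?eqxx !orbT.
- by rewrite eE eE2 last_cat /= last_cat.
Qed.

Lemma two_conn_B' : two_connected B' F'.
Proof.
split; [| exact: conn_B' | exact: conn_B'w].
apply: leq_trans card3 _; apply: subset_leq_card; exact: subsetUl.
Qed.

End Ear.


Section Pend.
Variables (T : finType) (e : rel T).
Hypotheses (irr : irreflexive e) (sym : symmetric e).
Variables (B : {set T}) (F : {set T * T}) (v : T).

Lemma ear (x : T) (p : seq T) (y : T) :
  y \notin B -> path [rel a c | [&& e a c, a \in setT :\ x & c \in setT :\ x]] y p ->
  last y p \in B ->
  exists s, exists2 b, [/\ path e y s, (forall u, u \in y :: s -> u \notin B), e (last y s) b & b \in B] & b != x.
Proof.
elim: p y => [| a p IH] y yB /=; first by move=> _ h; rewrite h in yB.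
move=> /andP [/and3P [eya _ ax] pp] la.
move: ax; rewrite !inE andbT => ax.
case: (boolP (a \in B)) => aB.
  exists [::], a; last exact: ax.
  split=> // u; rewrite inE => /eqP ->; exact: yB.
have [s [b [ps hs eb bB] bx]] := IH a aB pp la.
exists (a :: s), b => //; split=> //=.
  by rewrite eya.
move=> u; rewrite inE => /orP [/eqP -> // | us]; exact: hs.
Qed.

Hypotheses (hpend : pendant_block_at e B F v) (compl : forall x y, x \in B -> y \in B -> x != y -> (x, y) \in F).

Lemma cliqueB x y : x \in B -> y \in B -> x != y -> e x y.
Proof.
case: hpend => [[[subF _] _ _] _ _ _] xB yB xy.
by have /and3P [] := subF _ (compl xB yB xy).
Qed.

Lemma pendP x z : x \in B -> x != v -> e x z -> z \in B.
Proof.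
move=> xB xv exz; apply/negPn/negP => zB.
case: hpend => [[[subF symF] [card3 _ _] maxB] vB _ uniq_cut].
have zx : z != x by apply/eqP => zx; rewrite zx xB in zB.
have nocut : ~ cutpoint e x by move=> c; move/eqP: xv; apply; exact: uniq_cut x xB c.
have J : joined e (setT :\ x) z v.
  apply/negPn/negP => nJ; apply: nocut; exists z, v; split=> //.
    by rewrite eq_sym.
  apply/connectP; exists [:: x; v] => //=.
  by rewrite !in_setT sym exz cliqueB.
move/connectP: J => [p pth lastv].
have lB : last z p \in B by rewrite -lastv.
have [s [b [ps hs eb bB] bx]] := ear zB pth lB.
move: eb; case: (shortenP ps) => s' ps' us' subs' eb.
have pE : path e x (z :: s') by rewrite /= exz ps'.
have uE : uniq (z :: s') by [].
have outE : forall u, u \in z :: s' -> u \notin B.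
  move=> u; rewrite inE => /orP [/eqP -> | us]; apply: hs; rewrite ?inE ?eqxx //.
  by rewrite (subs' _ us) orbT.
have card3' : 2 < #|B| by [].
have tc := two_conn_B' sym cliqueB xB bB bx pE uE outE (erefl true) eb card3'.
have sg : subgraph e (B' B (z :: s')) (F' e B (z :: s')).
  split.
    by move=> q; rewrite inE.
  move=> a c; rewrite !inE /= sym => /and3P [-> -> ->]; by [].
have sB : B \subset B' B (z :: s') by exact: subsetUl.
have sF : F \subset F' e B (z :: s').
  apply/subsetP => q qF; have /and3P [eq1 q1 q2] := subF q qF.
  by rewrite inE eq1 !inE q1 q2.
have [eB _] := maxB _ _ sg tc sB sF.
by move: zB; rewrite eB !inE eqxx orbT.
Qed.

End Pend.

Unset Implicit Arguments.

Theorem corollary2p8 (T : finType) (e : rel T) (r : nat)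
    (B : {set T}) (F : {set T * T}) (v : T) :
  simple_graph e -> 3 <= r ->
  pendant_block_at e B F v -> complete_subgraph r B F ->
  #|MIM e setT| =
    'C(r.-1, 2) * #|MIM e (~: B)|
    + \sum_(p in N e v) #|MIM e (~: (Nc e v :|: Nc e p))|.
Proof.
move=> [irr sym] r3 hpend [cardB compl].
have vB : v \in B by case: hpend.
have big : 2 < #|B| by rewrite cardB.
have hcd : #|B :\ v| = r.-1 by rewrite -cardB (cardsD1 v B) vB.
rewrite (split_count irr sym v).
rewrite (cardA0 irr sym vB (cliqueB hpend compl) (pendP sym hpend compl) big) hcd.
congr (_ + _); apply: eq_bigr => p; rewrite inE => evp.
exact: cardAp.
Qed.
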